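(* Let $p(x,y)\not\equiv0$ be a real polynomial with $p(0,0)=0$, $\nabla p(0,0)=(0,0)$, such that every main $A'$-quasi-homogeneous form of $p$ ($A'\in\mathbb{N}^2$) consisting of one or two terms is nonnegative on $\mathbb{R}^2$ and nondegenerate in the weak sense. Let $A=(A_1,A_2)\in\mathcal{A}_p$ and suppose the exponent vectors $k$ of $p$ take exactly two values $B_1^A<B_2^A$ of $\langle A,k\rangle$, so that $p=\varphi_1^A+\varphi_2^A$. Suppose there is $u_0\in U_p(A)$ which is a root of $g_1^A$ of even multiplicity $k\ge2$ and a root of $g_2^A$ of multiplicity exactly $1$. Then $(0,0)$ is not a point of local minimum of $p$.
   Context: $\mathbb{N}=\{1,2,\dots\}$; $\mathbb{N}_0^2$ is the set of $(A_1,A_2)\in\mathbb{N}^2$ with $\gcd(A_1,A_2)=1$. $N_p$ is the support of $p$. For $A'\in\mathbb{N}^2$, the main $A'$-quasi-homogeneous form of $p$ is the sum of the terms of $p$ whose exponent vectors $k$ minimize $\langle A',k\rangle$ over $N_p$. A function $f$ is nondegenerate in the weak sense if $f(x,y)\ne0$ whenever $x\ne0,y\ne0$. For $A\in\mathbb{N}_0^2$, $\varphi_j^A$ is the sum of terms of $p$ with $\langle A,k\rangle=B_j^A$ ($B_1^A<B_2^A<\dots$ the distinct values on $N_p$), so $\varphi_1^A$ is the main $A$-form. For such a form $\sum_ic_ix^{\gamma_i}y^{\delta_i}$ ($c_i\ne0$, $\gamma_1>\gamma_2>\dots$) the characteristic polynomial is $\sum_ic_iu^{(\gamma_1-\gamma_i)/A_2}$;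 $g_1^A,g_2^A$ are those of $\varphi_1^A,\varphi_2^A$. $\mathcal{A}_p$ is the set of $A\in\mathbb{N}_0^2$ such that $\varphi_1^A$ has at least three terms, $g_1^A\ge0$ on $\mathbb{R}$, and $g_1^A$ has a real root; $U_p(A)$ is the set of real roots of $g_1^A$. Local minimum at $(0,0)$ means $p\ge p(0,0)$ near $(0,0)$. *)

(* Defs.v *)
From mathcomp Require Import all_boot all_algebra.
From mathcomp Require Import reals.
From mathcomp Require Export mpoly.
Set Implicit Arguments. Unset Strict Implicit. Unset Printing Implicit Defensive.
Import GRing.Theory Num.Theory.
Local Open Scope ring_scope.

Definition ix : 'I_2 := ord0.
Definition iy : 'I_2 := ord_max.

Section Defs.
Variable R : realType.

Definition ev (p : {mpoly R[2]}) (x y : R) : R :=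
  p.@[fun i : 'I_2 => if i == ix then x else y].

Definition nterms (p : {mpoly R[2]}) : nat := size (msupp p).

Definition wdeg (A : nat * nat) (k : 'X_{1..2}) : nat :=
  (A.1 * k ix + A.2 * k iy)%N.

Definition qform (A : nat * nat) (b : nat) (p : {mpoly R[2]}) : {mpoly R[2]} :=
  \sum_(k <- msupp p | wdeg A k == b) p@_k *: 'X_[k].

(* B_1^A < B_2^A < ... : the distinct values of <A,k> on N_p, listed
   increasingly (0-indexed: Bs A p)`_0 = B_1^A). *)
Definition Bs (A : nat * nat) (p : {mpoly R[2]}) : seq nat :=
  sort leq (undup [seq wdeg A k | k <- msupp p]).

Definition phi (A : nat * nat) (j : nat) (p : {mpoly R[2]}) : {mpoly R[2]} :=
  qform A (nth 0%N (Bs A p) j.-1) p.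

Definition main_form (A : nat * nat) (p : {mpoly R[2]}) : {mpoly R[2]} :=
  phi A 1 p.

(* A in N^2 *)
Definition posvec (A : nat * nat) : bool := (0 < A.1)%N && (0 < A.2)%N.
Definition N0vec (A : nat * nat) : bool := posvec A && coprime A.1 A.2.

(* characteristic polynomial of a quasi-homogeneous form
   sum_i c_i x^gamma_i y^delta_i : sum_i c_i u^((gamma_1 - gamma_i)/A_2)
   where gamma_1 is the largest x-exponent. *)
Definition charpoly2 (A : nat * nat) (f : {mpoly R[2]}) : {poly R} :=
  let g1 := \max_(k <- msupp f) k ix in
  \sum_(k <- msupp f) f@_k *: 'X^((g1 - k ix) %/ A.2).

Definition g (A : nat * nat) (j : nat) (p : {mpoly R[2]}) : {poly R} :=
  charpoly2 A (phi A j p).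

Definition nonneg2 (f : {mpoly R[2]}) : Prop := forall x y : R, 0 <= ev f x y.

Definition nondeg_weak (f : {mpoly R[2]}) : Prop :=
  forall x y : R, x != 0 -> y != 0 -> ev f x y != 0.

Definition in_calA (p : {mpoly R[2]}) (A : nat * nat) : Prop :=
  [/\ N0vec A, (3 <= nterms (phi A 1 p))%N,
      (forall u : R, 0 <= (g A 1 p).[u]) & exists u : R, root (g A 1 p) u].

Definition U (p : {mpoly R[2]}) (A : nat * nat) (u : R) : Prop := root (g A 1 p) u.

Definition local_min0 (p : {mpoly R[2]}) : Prop :=
  exists2 e : R, 0 < e & forall x y : R, `|x| < e -> `|y| < e -> ev p 0 0 <= ev p x y.

End Defs.

(* Main.v *)
Require Import Defs.
From mathcomp Require Import all_boot all_algebra.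
From mathcomp Require Import reals order.
From mathcomp Require Import mpoly.
From mathcomp Require Import polyrcf.
From mathcomp Require Import ring lra zify.
Import Order.TTheory GRing.Theory Num.Theory.
Local Open Scope ring_scope.

Section H.
Variable R : realType.

Lemma ev_sum (q : {mpoly R[2]}) x y :
  ev q x y = \sum_(k <- msupp q) q@_k * (x ^+ k ix * y ^+ k iy).
Proof.
rewrite /ev mevalE; apply: eq_bigr => k _.
rewrite big_ord_recl big_ord1 /=.
by have -> : (lift ord0 ord0 : 'I_2) = iy by apply/val_inj.
Qed.

Lemma ev_qform A b (p : {mpoly R[2]}) x y :
  ev (qform A b p) x y =
  \sum_(k <- msupp p | wdeg A k == b) p@_k * (x ^+ k ix * y ^+ k iy).
Proof.
rewrite /ev /qform (big_morph _ (mevalD _) (meval0 _)).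
apply: eq_bigr => k _; rewrite mevalZ mevalX.
rewrite big_ord_recl big_ord1 /=.
by have -> : (lift ord0 ord0 : 'I_2) = iy by apply/val_inj.
Qed.

Lemma qform_coef A b (p : {mpoly R[2]}) k :
  (qform A b p)@_k = if wdeg A k == b then p@_k else 0.
Proof.
rewrite /qform (big_morph _ (mcoeffD k) (mcoeff0 _ k)).
under eq_bigr => k' _ do rewrite mcoeffZ mcoeffX.
rewrite -big_filter.
case: (boolP (k \in msupp p)) => Hk.
- case: ifP => Hw.
  + rewrite (bigD1_seq k) ?filter_uniq ?msupp_uniq //; last by rewrite mem_filter Hw.
    rewrite eqxx mulr1 big1 /=; first by rewrite addr0.
    by move=> i /negbTE; rewrite eq_sym => ->; rewrite mulr0.
  + rewrite big1_seq // => i /andP [_]; rewrite mem_filter => /andP [Hi _].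
    case: (eqVneq i k) => [E|]; last by rewrite mulr0.
    by move: Hi; rewrite E /= Hw.
- have -> : p@_k = 0 by apply/eqP; move: Hk; rewrite mcoeff_msupp negbK.
  rewrite if_same big1_seq // => i /andP [_]; rewrite mem_filter => /andP [_ Hi].
  case: (eqVneq i k) => [E|]; last by rewrite mulr0.
  by move: Hi; rewrite E (negbTE Hk).
Qed.

Lemma qform_supp A b (p : {mpoly R[2]}) k :
  k \in msupp (qform A b p) -> wdeg A k = b.
Proof.
rewrite mcoeff_msupp qform_coef; case: ifP => [/eqP//|]; by rewrite eqxx.
Qed.

Lemma ev_qform_scale A b (p : {mpoly R[2]}) x y t :
  ev (qform A b p) (x * t ^+ A.1) (y * t ^+ A.2) = t ^+ b * ev (qform A b p) x y.
Proof.
rewrite !ev_qform mulr_sumr; apply: eq_bigr => k /eqP <-.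
rewrite /wdeg !exprMn -!exprM exprD; ring.
Qed.


Lemma mnm2_eq (k k' : 'X_{1..2}) : k ix = k' ix -> k iy = k' iy -> k = k'.
Proof.
move=> h1 h2; apply/mnmP => i; case: i => [[|[|//]]] Hi.
- by have -> : Ordinal Hi = ix by apply/val_inj.
- by have -> : Ordinal Hi = iy by apply/val_inj.
Qed.

Lemma bigmax_att (T : eqType) (s : seq T) (F : T -> nat) :
  s != [::] -> exists2 k, k \in s & \max_(i <- s) F i = F k.
Proof.
elim: s => [//|a s IH] _.
rewrite big_cons.
case: (eqVneq s [::]) => [->|sn].
  by exists a; rewrite ?mem_head // big_nil maxn0.
have [k ks ->] := IH sn.
case: (leqP (F k) (F a)) => h.
  by exists a; rewrite ?mem_head //; apply/maxn_idPl.
by exists k; rewrite ?inE ?ks ?orbT //; apply/maxn_idPr/ltnW.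
Qed.

Lemma arith (A1 A2 g0 d0 k0 k1 : nat) :
  coprime A1 A2 -> (0 < A2)%N -> (k0 <= g0)%N ->
  (A1 * k0 + A2 * k1 = A1 * g0 + A2 * d0)%N ->
  (k0 + A2 * ((g0 - k0) %/ A2) = g0)%N /\ (k1 = d0 + A1 * ((g0 - k0) %/ A2))%N.
Proof.
move=> cop A2p kg e.
have kd : (d0 <= k1)%N.
  rewrite -(leq_pmul2l A2p).
  have : (A1 * k0 <= A1 * g0)%N by rewrite leq_mul2l kg orbT.
  lia.
have e1 : (A1 * (g0 - k0) = A2 * (k1 - d0))%N.
  rewrite !mulnBr.
  have : (A1 * k0 <= A1 * g0)%N by rewrite leq_mul2l kg orbT.
  lia.
have dv : (A2 %| g0 - k0)%N.
  have cop2 : coprime A2 A1 by rewrite coprime_sym.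
  by rewrite -(Gauss_dvdr (g0 - k0) cop2) e1 dvdn_mulr.
have hm := divnK dv.
set m := ((g0 - k0) %/ A2)%N in hm *.
split; first by rewrite mulnC hm subnKC.
have : (A2 * (k1 - d0) = A2 * (A1 * m))%N.
  by rewrite -e1 -hm; lia.
move/eqP; rewrite eqn_pmul2l // => /eqP h.
by rewrite -h subnKC.
Qed.


Lemma horner_char A (f : {mpoly R[2]}) u :
  (charpoly2 A f).[u] =
  \sum_(k <- msupp f) f@_k * u ^+ (((\max_(k <- msupp f) k ix) - k ix) %/ A.2).
Proof.
rewrite /charpoly2 horner_sum; apply: eq_bigr => k _.
by rewrite hornerZ hornerXn.
Qed.

Lemma charid (A : nat * nat) (f : {mpoly R[2]}) B :
  coprime A.1 A.2 -> (0 < A.2)%N -> msupp f != [::] ->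
  (forall k, k \in msupp f -> wdeg A k = B) ->
  exists gam del : nat, (forall x0 w : R, x0 ^+ 2 = 1 ->
      ev f x0 w = x0 ^+ gam * w ^+ del * (charpoly2 A f).[x0 ^+ A.2 * w ^+ A.1])
   /\ (charpoly2 A f).[0] != 0.
Proof.
move=> cop A2p ne hom.
set gam := (\max_(k <- msupp f) k ix).
have [ks ksin ksmax] := @bigmax_att _ (msupp f) (fun k : 'X_{1..2} => k ix) ne.
rewrite -/gam in ksmax.
exists gam, (ks iy).
have key : forall k, k \in msupp f ->
   (k ix + A.2 * ((gam - k ix) %/ A.2) = gam)%N /\
   (k iy = ks iy + A.1 * ((gam - k ix) %/ A.2))%N.
  move=> k kin; apply: arith => //.
    by rewrite /gam; apply: (leq_bigmax_seq (F := fun k : 'X_{1..2} => k ix)).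
  have := hom k kin; have := hom ks ksin; rewrite /wdeg ksmax => -> //.
split.
- move=> x0 w hx.
  rewrite ev_sum horner_char mulr_sumr; apply: eq_big_seq => k kin.
  have [e1 e2] := key k kin.
  set m := ((gam - k ix) %/ A.2)%N in e1 e2 *.
  have ha : x0 ^+ (A.2 * m) * x0 ^+ (A.2 * m) = 1.
    by rewrite -expr2 -exprM mulnC exprM hx expr1n.
  have xg : x0 ^+ gam = x0 ^+ (k ix) * x0 ^+ (A.2 * m) by rewrite -exprD e1.
  have wg : w ^+ k iy = w ^+ ks iy * w ^+ (A.1 * m) by rewrite e2 exprD.
  have xw : (x0 ^+ A.2 * w ^+ A.1) ^+ m = x0 ^+ (A.2 * m) * w ^+ (A.1 * m).
    by rewrite exprMn !exprM.
  rewrite xg wg xw -[LHS]mulr1 -ha.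
  move: (x0 ^+ (A.2 * m)) (x0 ^+ k ix) (w ^+ ks iy) (w ^+ (A.1 * m)) (f@_k) => a b c d e.
  ring.
- rewrite horner_char -/gam (bigD1_seq ks) ?msupp_uniq //= ksmax subnn div0n expr0 mulr1.
  rewrite big1_seq ?addr0 ?mcoeff_msupp -?mcoeff_msupp //.
  move=> k /andP [kne kin]; rewrite -ksmax.
  have [e1 e2] := key k kin.
  case: (posnP ((gam - k ix) %/ A.2)) => [m0|mp]; last by rewrite expr0n gtn_eqF // mulr0.
  move: e1 e2; rewrite m0 muln0 addn0 => e1 e2.
  have kk : k = ks by apply: mnm2_eq; [rewrite e1 ksmax | rewrite e2 muln0 addn0].
  by move: kne; rewrite kk eqxx.
Qed.


Lemma Bs2 A (p : {mpoly R[2]}) : size (Bs A p) = 2%N ->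
  exists B1 B2, [/\ Bs A p = [:: B1; B2], (B1 < B2)%N &
     forall k, k \in msupp p -> wdeg A k = B1 \/ wdeg A k = B2].
Proof.
move=> hs.
have so : sorted leq (Bs A p) by apply: sort_sorted; exact: leq_total.
have un : uniq (Bs A p) by rewrite /Bs sort_uniq undup_uniq.
have mem : forall k, k \in msupp p -> wdeg A k \in Bs A p.
  by move=> k kin; rewrite /Bs mem_sort mem_undup map_f.
move: so un mem hs; case: (Bs A p) => [|a [|b [|c s]]] //= so un mem _.
exists a, b; split => //.
  by rewrite ltn_neqAle; move: un so; rewrite inE andbT => -> /= /andP[].
move=> k /mem; rewrite !inE => /orP [/eqP->|/eqP->]; by [left|right].
Qed.

Lemma ev_split A (p : {mpoly R[2]}) B1 B2 x y : B1 != B2 ->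
  (forall k, k \in msupp p -> wdeg A k = B1 \/ wdeg A k = B2) ->
  ev p x y = ev (qform A B1 p) x y + ev (qform A B2 p) x y.
Proof.
move=> ne hk.
rewrite ev_sum !ev_qform (bigID (fun k => wdeg A k == B1)) /=; congr (_ + _).
rewrite big_seq_cond [in RHS]big_seq_cond; apply: eq_bigl => k.
case kin: (k \in msupp p) => //=.
have ne' : B2 != B1 by rewrite eq_sym.
by have [->|->] := hk k kin; rewrite eqxx ?(negbTE ne) ?(negbTE ne').
Qed.


Lemma pos_root (c : R) n : 0 < c -> (0 < n)%N -> exists2 r : R, 0 < r & r ^+ n = c.
Proof.
move=> cp np.
have h0 : ('X^n - c%:P).[0] <= 0.
  by rewrite hornerD hornerN hornerXn hornerC expr0n gtn_eqF // sub0r oppr_le0 ltW.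
have h1 : 0 <= ('X^n - c%:P).[c + 1].
  rewrite hornerD hornerN hornerXn hornerC subr_ge0.
  have c1 : 1 <= c + 1 by rewrite lerDr ltW.
  have : c + 1 <= (c + 1) ^+ n by rewrite ler_eXnr.
  apply: le_trans; by rewrite lerDl.
have c0 : 0 <= c + 1 by rewrite addr_ge0 // ltW.
have [r /andP [r0 _]] := poly_ivt c0 (introT andP (conj h0 h1)).
rewrite /root hornerD hornerN hornerXn hornerC subr_eq0 => /eqP rn.
exists r => //; rewrite lt_neqAle r0 andbT; apply/eqP => r00.
by move: rn; rewrite -r00 expr0n gtn_eqF // => c00; move: cp; rewrite -c00 ltxx.
Qed.


Lemma pick (A1 A2 : nat) (u0 : R) : coprime A1 A2 -> (0 < A1)%N -> u0 != 0 ->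
  exists x0 w0 : R, [/\ x0 ^+ 2 = 1, w0 != 0 & x0 ^+ A2 * w0 ^+ A1 = u0].
Proof.
move=> cop A1p u0n.
have u0a : 0 < `|u0| by rewrite normr_gt0.
have [r r0 rn] := pos_root _ _ u0a A1p.
have rne : r != 0 by rewrite gt_eqF.
case: (ltgtP u0 0) => [un|up|ue]; last by move: u0n; rewrite ue eqxx.
- case oA2: (odd A2).
  + exists (-1), r; split => //; first by rewrite expr2 mulrNN mulr1.
    by rewrite -signr_odd oA2 expr1 rn ltr0_norm // mulN1r opprK.
  + have oA1 : odd A1.
      apply: contraT => oA1; move: cop; rewrite /coprime => /eqP g1.
      have : (2 %| gcdn A1 A2)%N by rewrite dvdn_gcd !dvdn2 oA1 oA2.
      by rewrite g1.
    exists 1, (- r); split => //; first by rewrite expr1n.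
    by rewrite oppr_eq0.
    by rewrite expr1n mul1r exprNn -signr_odd oA1 expr1 rn ltr0_norm // mulN1r opprK.
- exists 1, r; split => //; first by rewrite expr1n.
  by rewrite expr1n mul1r rn gtr0_norm.
Qed.


Definition PSp (A1 : nat) (w0 : R) : {poly R} :=
  \sum_(i < A1) 'X^(A1.-1 - i) * (w0 ^+ i)%:P.
Definition PPp (x0 : R) (A1 A2 : nat) : {poly R} := (x0 ^+ A2)%:P * 'X^A1.

Lemma PSp_eval A1 w0 w : (PSp A1 w0).[w] = \sum_(i < A1) w ^+ (A1.-1 - i) * w0 ^+ i.
Proof.
rewrite /PSp horner_sum; apply: eq_bigr => i _.
by rewrite hornerM hornerXn hornerC.
Qed.

Lemma PPp_eval x0 A1 A2 w : (PPp x0 A1 A2).[w] = x0 ^+ A2 * w ^+ A1.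
Proof. by rewrite /PPp hornerM hornerC hornerXn. Qed.

Lemma PSp_w0 A1 w0 : (PSp A1 w0).[w0] = A1%:R * w0 ^+ A1.-1.
Proof.
rewrite PSp_eval (eq_bigr (fun _ => w0 ^+ A1.-1)).
  by rewrite sumr_const card_ord mulr_natl.
move=> i _; rewrite -exprD subnK //.
by move: (ltn_ord i); lia.
Qed.

Lemma fac (x0 w0 u0 : R) (A1 A2 gam del n : nat) (G q : {poly R}) (F : R -> R) :
  u0 = x0 ^+ A2 * w0 ^+ A1 -> G = q * ('X - u0%:P) ^+ n ->
  (forall w, F w = x0 ^+ gam * w ^+ del * G.[x0 ^+ A2 * w ^+ A1]) ->
  forall w, F w = (w - w0) ^+ n *
    ((x0 ^+ gam * (x0 ^+ A2) ^+ n)%:P * 'X^del * (PSp A1 w0) ^+ n * (q \Po PPp x0 A1 A2)).[w].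
Proof.
move=> hu hG hF w.
rewrite hF hG hornerM horner_exp hornerXsubC hu -mulrBr subrXX -PSp_eval.
rewrite !hornerM !horner_exp hornerC hornerX horner_comp PPp_eval !exprMn.
move: (x0 ^+ gam) ((x0 ^+ A2) ^+ n) ((w - w0) ^+ n) ((PSp A1 w0).[w] ^+ n) (w ^+ del)
  (q.[x0 ^+ A2 * w ^+ A1]) => a b c d e f'.
ring.
Qed.


Lemma mup0 (x : R) : mup x 0 = 0%N.
Proof.
have : (mup x 0%R < (size (0%R : {poly R})).+1)%N by rewrite /mup; apply: ltn_ord.
by rewrite size_poly0; case: (mup x 0%R).
Qed.

Lemma small (a b : R) : 0 < a -> 0 < b ->
  exists2 t : R, 0 < t & [/\ t < 1, t <= a & t <= b].
Proof.
move=> a0 b0; exists (Num.min (1/2) (Num.min a b)).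
  by rewrite !lt_min a0 b0 divr_gt0.
split.
- rewrite gt_min; apply/orP; left.
  by rewrite ltr_pdivrMr // mul1r ltr1n.
- by rewrite ge_min ge_min lexx /= !orbT.
- by rewrite ge_min !ge_min lexx /= !orbT.
Qed.

Lemma tle (t : R) n : 0 < t -> t < 1 -> (0 < n)%N -> t ^+ n <= t.
Proof.
move=> t0 t1; case: n => [//|n] _.
rewrite exprS; have h : t ^+ n <= 1 by rewrite exprn_ile1 // ltW.
by rewrite -[X in _ <= X]mulr1 ler_pM2l.
Qed.

Lemma final (e : R) (F : R -> R -> R) (x0 w0 : R) (H1 H2 : {poly R})
    (B1 B2 A1 A2 : nat) :
  0 < e -> `|x0| = 1 -> (B1 < B2)%N -> (0 < A1)%N -> (0 < A2)%N -> H2.[w0] != 0 ->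
  (forall t w, F (x0 * t ^+ A1) (w * t ^+ A2) =
      t ^+ B1 * ((w - w0) ^+ 2 * H1.[w]) + t ^+ B2 * ((w - w0) ^+ 1 * H2.[w])) ->
  exists x y, [/\ `|x| < e, `|y| < e & F x y < 0].
Proof.
move=> e0 x01 B12 A1p A2p H2n hF.
set c := `|H2.[w0]|.
have c0 : 0 < c by rewrite normr_gt0.
have c20 : 0 < c / 2 by rewrite divr_gt0.
have [d2 d2p hd2] := poly_cont w0 H2 c20.
have [d1 d1p hd1] := poly_cont w0 H1 ltr01.
set M := `|H1.[w0]| + 1.
have Mp : 0 < M by rewrite ltr_pwDr.
set sg : R := if 0 < H2.[w0] then -1 else 1.
have sg2 : sg * sg = 1 by rewrite /sg; case: ifP => _; rewrite ?mulrNN mulr1.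
have sgn : `|sg| = 1 by rewrite /sg; case: ifP => _; rewrite ?normrN normr1.
have sgH : sg * H2.[w0] = - c.
  rewrite /sg /c; case: ifP => h; first by rewrite mulN1r gtr0_norm.
  rewrite mul1r ltr0_norm ?opprK //.
  by rewrite lt_neqAle H2n /= leNgt h.
set dl := c / (4 * M).
have dlp : 0 < dl by rewrite divr_gt0 // mulr_gt0.
have dlM : dl * M = c / 4.
  by rewrite /dl; field; rewrite gt_eqF.
set d := Num.min (Num.min d1 d2) 1.
have dp : 0 < d by rewrite !lt_min d1p d2p ltr01.
have w2 : 0 < `|w0| + 2 by rewrite ltr_pwDr.
have dl1 : 0 < dl + 1 by rewrite ltr_pwDr // ltW.
have [t tp [t1 te td]] := small (e / (`|w0| + 2)) (d / (dl + 1))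
  (divr_gt0 e0 w2) (divr_gt0 dp dl1).
rewrite ler_pdivlMr // in te.
rewrite ler_pdivlMr // in td.
set tau := t ^+ (B2 - B1).
have taup : 0 < tau by apply: exprn_gt0.
have taut : tau <= t by apply: tle => //; rewrite subn_gt0.
have tB : t ^+ B2 = t ^+ B1 * tau by rewrite /tau -exprD subnKC // ltnW.
set w := w0 + sg * dl * tau.
have ww : w - w0 = sg * dl * tau by rewrite /w addrC addKr.
have nww : `|w - w0| = dl * tau.
  by rewrite ww normrM (gtr0_norm taup) normrM sgn mul1r (gtr0_norm dlp).
have sd : dl * tau < d.
  have : dl * tau <= dl * t by rewrite ler_pM2l.
  nra.
have dd1 : d <= d1 by rewrite ge_min ge_min lexx.
have dd2 : d <= d2 by rewrite ge_min ge_min lexx orbT.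
have dd3 : d <= 1 by rewrite ge_min lexx orbT.
have lt1 : `|w - w0| < d1 by rewrite nww; apply: (lt_le_trans sd).
have lt2 : `|w - w0| < d2 by rewrite nww; apply: (lt_le_trans sd).
have lt3 : `|w - w0| < 1 by rewrite nww; apply: (lt_le_trans sd).
have b1 : dl * H1.[w] < c / 4.
  have hA := hd1 w lt1.
  have h1 : H1.[w] - H1.[w0] <= `|H1.[w] - H1.[w0]| := ler_norm _.
  have h0 : H1.[w0] <= `|H1.[w0]| := ler_norm _.
  have : H1.[w] < M by rewrite /M; lra.
  by rewrite -dlM ltr_pM2l.
have b2 : sg * H2.[w] <= - (c / 2).
  have hA := hd2 w lt2.
  have h1 : sg * (H2.[w] - H2.[w0]) <= `|sg * (H2.[w] - H2.[w0])| := ler_norm _.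
  rewrite normrM sgn mul1r mulrBr sgH in h1.
  lra.
have tA1 : t ^+ A1 <= t by apply: tle.
have tA2 : t ^+ A2 <= t by apply: tle.
have tA2p : 0 < t ^+ A2 by apply: exprn_gt0.
have w0p : 0 <= `|w0| := normr_ge0 _.
exists (x0 * t ^+ A1), (w * t ^+ A2); split.
- have tA1p : 0 < t ^+ A1 by apply: exprn_gt0.
  rewrite normrM x01 mul1r (gtr0_norm tA1p).
  nra.
- rewrite normrM (gtr0_norm tA2p).
  have hw : `|w| <= `|w0| + `|w - w0|.
    by have := ler_normD w0 (w - w0); rewrite addrC subrK.
  have hw2 : `|w| < `|w0| + 1 by lra.
  have hw0 : 0 <= `|w| := normr_ge0 _.
  nra.
- rewrite hF ww tB.
  have -> : t ^+ B1 * ((sg * dl * tau) ^+ 2 * H1.[w]) +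
      t ^+ B1 * tau * ((sg * dl * tau) ^+ 1 * H2.[w]) =
      (t ^+ B1 * tau ^+ 2 * dl) * (dl * H1.[w] * (sg * sg) + sg * H2.[w]) by ring.
  rewrite sg2 mulr1 pmulr_rlt0; first lra.
  apply: mulr_gt0 => //; apply: mulr_gt0; apply: exprn_gt0 => //.
Qed.

End H.

Theorem mainTheorem15 (R : realType) (p : {mpoly R[2]}) (A : nat * nat) (u0 : R) :
  p != 0 ->
  ev p 0 0 = 0 ->
  ev (mderiv ix p) 0 0 = 0 -> ev (mderiv iy p) 0 0 = 0 ->
  (forall A' : nat * nat, posvec A' ->
     (nterms (main_form A' p) = 1%N \/ nterms (main_form A' p) = 2%N) ->
     nonneg2 (main_form A' p) /\ nondeg_weak (main_form A' p)) ->
  in_calA p A ->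
  size (Bs A p) = 2%N ->
  U p A u0 ->
  (2 <= mup u0 (g A 1 p))%N -> ~~ odd (mup u0 (g A 1 p)) ->
  mup u0 (g A 2 p) = 1%N ->
  ~ local_min0 p.
Proof.
move=> _ p00 _ _ _ [NA nt _ _] hBs hU hk1 _ hk2 [e e0 hmin].
move: NA => /andP [/andP [A1p A2p] cop].
have [B1 [B2 [BsE B12 hw]]] := Bs2 _ _ _ hBs.
have phi1E : phi A 1 p = qform A B1 p by rewrite /phi BsE.
have phi2E : phi A 2 p = qform A B2 p by rewrite /phi BsE.
move: hU hk1 hk2 nt; rewrite /U /g /nterms phi1E phi2E.
set f1 := qform A B1 p; set f2 := qform A B2 p.
set G1 := charpoly2 A f1; set G2 := charpoly2 A f2.
move=> hU hk1 hk2 nt.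
have ne1 : msupp f1 != [::] by apply/eqP => E; move: nt; rewrite E.
have G2n : G2 != 0 by apply/eqP => E; move: hk2; rewrite E mup0.
have ne2 : msupp f2 != [::].
  by apply/eqP => E; move: G2n; rewrite /G2 /charpoly2 E big_nil eqxx.
have [gam1 [del1 [id1 nz1]]] := @charid R A f1 B1 cop A2p ne1 (@qform_supp R A B1 p).
have [gam2 [del2 [id2 nz2]]] := @charid R A f2 B2 cop A2p ne2 (@qform_supp R A B2 p).
have u0n : u0 != 0.
  by apply/eqP => E; move: hU; rewrite E /root (negbTE nz1).
have [x0 [w0 [hx0 w0n hu]]] := @pick R A.1 A.2 u0 cop A1p u0n.
have G1n : G1 != 0 by apply/eqP => E; move: nz1; rewrite -/G1 E horner0 eqxx.
have [q1 hq1] : exists q1, G1 = q1 * ('X - u0%:P) ^+ 2.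
  by apply/dvdpP; rewrite -mup_geq.
have [q2 hq2] : exists q2, G2 = q2 * ('X - u0%:P) ^+ 1.
  by apply/dvdpP; rewrite -mup_geq // hk2.
have q2u : q2.[u0] != 0.
  apply/negP => r.
  have : (('X - u0%:P) ^+ 2 %| G2).
    by rewrite hq2 expr1 expr2 dvdp_mul // dvdp_XsubCl.
  by rewrite -mup_geq // hk2.
have x0n : x0 != 0 by apply/eqP => E; move: hx0; rewrite E expr0n /= => /eqP; rewrite eq_sym oner_eq0.
have fac1 := @fac R x0 w0 u0 A.1 A.2 gam1 del1 2 G1 q1 (fun w => ev f1 x0 w) (esym hu) hq1
   (fun w => id1 x0 w hx0).
have fac2 := @fac R x0 w0 u0 A.1 A.2 gam2 del2 1 G2 q2 (fun w => ev f2 x0 w) (esym hu) hq2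
   (fun w => id2 x0 w hx0).
simpl in fac1, fac2.
set H1 := (_ * _ * _ * _ : {poly R}) in fac1.
set H2 := (_ * _ * _ * _ : {poly R}) in fac2.
have H2n : H2.[w0] != 0.
  rewrite /H2 !hornerM !horner_exp hornerC hornerX horner_comp PPp_eval hu PSp_w0.
  rewrite !mulf_neq0 ?expf_neq0 // pnatr_eq0 -lt0n //.
have x01 : `|x0| = 1 by apply/eqP; rewrite -sqr_norm_eq1 hx0.
have hFF : forall t w, ev p (x0 * t ^+ A.1) (w * t ^+ A.2) =
    t ^+ B1 * ((w - w0) ^+ 2 * H1.[w]) + t ^+ B2 * ((w - w0) ^+ 1 * H2.[w]).
  move=> t w.
  have ne : B1 != B2 by rewrite ltn_eqF.
  rewrite (@ev_split R A p B1 B2 _ _ ne hw) !ev_qform_scale -/f1 -/f2.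
  by rewrite fac1 fac2.
have [x [y [hx hy hneg]]] := @final R e (ev p) x0 w0 H1 H2 B1 B2 A.1 A.2 e0 x01 B12 A1p A2p H2n hFF.
by have := hmin x y hx hy; rewrite p00 leNgt hneg.
Qed.
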